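(* Let $l$ be a prime number and let $a,b,c\in\mathbb{Z}$ satisfy $\gcd(a,b)=1$ and $(a-b)^4+a^4+(a+b)^4=c^l$. Let $K=\mathbb{Q}(\sqrt{30})$ and let $E_1,E_2$ be the elliptic curves over $K$ $$E_1:\ y^2=x^3+60a\,x^2+30\big((15+3\sqrt{30})a^2+\sqrt{30}\,b^2\big)x,$$ $$E_2:\ y^2=x^3+40b\,x^2+20\big(\sqrt{30}\,a^2+(10+2\sqrt{30})b^2\big)x,$$ with $j$-invariants $j_1(a,b)=j(E_1)$ and $j_2(a,b)=j(E_2)$. Then $j_1(a,b)$ and $j_2(a,b)$ are not integral. Moreover, there exists a prime of $K$ of residue characteristic $>5$ at which both $j_1(a,b)$ and $j_2(a,b)$ are non-integral. *)

(* Defs.v *)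
(* K = Q(sqrt 30) is realised inside the algebraic complex numbers algC. *)
From mathcomp Require Import all_boot all_order all_algebra all_field.
Set Implicit Arguments. Unset Strict Implicit. Unset Printing Implicit Defensive.
Import Order.TTheory GRing.Theory Num.Theory.
Local Open Scope ring_scope.

Definition s30 : algC := sqrtC 30%:R.

Definition inK (x : algC) : Prop :=
  exists q1 q2 : rat, x = ratr q1 + ratr q2 * s30.

Definition inOK (x : algC) : Prop := inK x /\ x \in Aint.

Record prime_ideal_OK (P : algC -> Prop) : Prop := {
  pi_sub : forall x, P x -> inOK x;
  pi_0 : P 0;
  pi_add : forall x y, P x -> P y -> P (x + y);
  pi_mul : forall r x, inOK r -> P x -> P (r * x);
  pi_proper : ~ P 1;
  pi_prime : forall x y, inOK x -> inOK y -> P (x * y) -> P x \/ P y;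
  pi_nonzero : exists x, P x /\ x != 0 }.

(* x lies in the localisation (O_K)_P, i.e. v_P(x) >= 0 *)
Definition integral_at (P : algC -> Prop) (x : algC) : Prop :=
  exists al be : algC, [/\ inOK al, inOK be, ~ P be & x = al / be].

Definition residue_char (P : algC -> Prop) (p : nat) : Prop :=
  prime p /\ P p%:R.

Definition j_weierstrass (a1 a2 a3 a4 a6 : algC) : algC :=
  let b2 := a1 ^+ 2 + 4%:R * a2 in
  let b4 := 2%:R * a4 + a1 * a3 in
  let b6 := a3 ^+ 2 + 4%:R * a6 in
  let b8 := a1 ^+ 2 * a6 + 4%:R * a2 * a6 - a1 * a3 * a4 + a2 * a3 ^+ 2 - a4 ^+ 2 in
  let c4 := b2 ^+ 2 - 24%:R * b4 in
  let D := - b2 ^+ 2 * b8 - 8%:R * b4 ^+ 3 - 27%:R * b6 ^+ 2 + 9%:R * b2 * b4 * b6 in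
  c4 ^+ 3 / D.

Definition j1 (a b : int) : algC :=
  j_weierstrass 0 (60%:R * a%:~R) 0
    (30%:R * ((15%:R + 3%:R * s30) * a%:~R ^+ 2 + s30 * b%:~R ^+ 2)) 0.

Definition j2 (a b : int) : algC :=
  j_weierstrass 0 (40%:R * b%:~R) 0
    (20%:R * (s30 * a%:~R ^+ 2 + (10%:R + 2%:R * s30) * b%:~R ^+ 2)) 0.

(* Main.v *)
Require Import Defs.
From mathcomp Require Import all_boot all_order all_algebra all_field.
From mathcomp Require Import ring lra zify.
Import Order.TTheory GRing.Theory Num.Theory.
Local Open Scope ring_scope.

Lemma s30sq : s30 ^+ 2 = 30%:R.
Proof. by rewrite /s30 sqrtCK. Qed.

Lemma s30_Aint : s30 \in Aint.
Proof.
apply: (@root_monic_Aint ('X^2 - (30%:R)%:P)).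
- by rewrite /root !hornerE s30sq subrr.
- by rewrite monicXnsubC.
- by rewrite polyOverXnsubC ?rpred_nat.
Qed.

Lemma s30_notCrat : s30 \notin Crat.
Proof.
apply/negP => hQ.
have /intrP[m hm] := Cint_rat_Aint hQ s30_Aint.
have h : (m * m)%R = 30 :> int.
  apply: (@intr_inj algC); rewrite rmorphM /= -hm -expr2 s30sq.
  by rewrite -[30%:R]/((30%:Z)%:~R).
have [[h1 h2]|[h1|h1]] : ((m <= 5 /\ -5 <= m) \/ (6 <= m \/ m <= -6))%R by lia.
- have : (m * m <= 25)%R by nia. lia.
- have : (36 <= m * m)%R by nia. lia.
- have : (36 <= m * m)%R by nia. lia.
Qed.

Lemma K_uniq0 (x y : algC) : x \in Crat -> y \in Crat -> x + y * s30 = 0 -> x = 0 /\ y = 0.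
Proof.
move=> hx hy h.
have hy0 : y = 0.
  apply/eqP; apply/negPn/negP => hy0.
  have e : y * s30 = - x by apply/eqP; rewrite -addr_eq0 addrC h.
  have : s30 = - x / y by rewrite -e [y * s30]mulrC mulfK.
  by move=> e2; move: s30_notCrat; rewrite e2 rpredM ?rpredN ?rpredV.
by split=> //; move: h; rewrite hy0 mul0r addr0.
Qed.

Lemma trace_int (q1 q2 : rat) : ratr q1 + ratr q2 * s30 \in Aint -> (ratr (2%:R * q1) : algC) \in Num.int.
Proof.
set x := ratr q1 + ratr q2 * s30 => hA.
have [q20|q2n0] := eqVneq q2 0.
  have hx : x = ratr q1 by rewrite /x q20 rmorph0 mul0r addr0.
  have : x \in Num.int by apply: Cint_rat_Aint => //; rewrite hx Crat_rat.
  by rewrite hx rmorphM rmorph_nat /= => h; rewrite rpredM ?rpred_nat.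
have xnQ : x \notin Crat.
  apply/negP => hQ; move: s30_notCrat; apply/negP/negPn.
  have -> : s30 = (x - ratr q1) / ratr q2.
    by rewrite /x addrC addKr mulrC mulKf // fmorph_eq0.
  by rewrite rpredM ?rpredB ?rpredV ?Crat_rat.
have [p [Dp mon_p] dvp] := minCpolyP x.
pose g : {poly rat} := ('X + (- (2%:R * q1))%:P) * 'X + (q1 ^+ 2 - 30%:R * q2 ^+ 2)%:P.
have sg : size g = 3%N.
  by rewrite /g size_MXaddC -size_poly_eq0 size_XaddC.
have mg : g \is monic.
  rewrite monicE /g lead_coefDl ?lead_coefMX ?(eqP (monicXaddC _)) //.
  rewrite size_mulX ?size_XaddC; last by rewrite -size_poly_eq0 size_XaddC.
  exact: leq_ltn_trans (size_polyC_leq1 _) _.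
have rg : root (map_poly ratr g) x.
  have gen c1 c0 : root (map_poly ratr (('X + c1%:P) * 'X + c0%:P)) x = ((x + ratr c1) * x + ratr c0 == 0).
    by rewrite /root rmorphD rmorphM rmorphD /= map_polyX !map_polyC !hornerE.
  rewrite /g gen.
  have -> : ratr (- (2%:R * q1)) = - (2%:R * ratr q1) :> algC.
    by rewrite rmorphN rmorphM /= rmorph_nat.
  have -> : ratr (q1 ^+ 2 - 30%:R * q2 ^+ 2) = ratr q1 ^+ 2 - 30%:R * ratr q2 ^+ 2 :> algC.
    by rewrite rmorphB rmorphXn rmorphM /= rmorph_nat rmorphXn.
  rewrite /x; apply/eqP; transitivity ((s30 ^+ 2 - 30%:R) * ratr q2 ^+ 2); first by ring.
  by rewrite s30sq subrr mul0r.
have pg : (p %| g)%R by rewrite -dvp.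
have sp2 : (1 < size p)%N by rewrite -(size_map_poly (@ratr algC)) -Dp size_minCpoly.
have sp3 : (size p <= 3)%N by rewrite -sg dvdp_leq // -size_poly_eq0 sg.
have sp2n : size p <> 2%N.
  move=> hs.
  move: xnQ; apply/negP/negPn.
  have := root_minCpoly x; rewrite Dp /root horner_coef size_map_poly hs.
  rewrite !big_ord_recl big_ord0 addr0 !coef_map /=.
  have -> : p`_1 = 1 by rewrite -(monicP mon_p) lead_coefE hs.
  rewrite expr0 mulr1 /= expr1 rmorph1 mul1r => /eqP h.
  have -> : x = - ratr p`_0 by apply/eqP; rewrite -addr_eq0 addrC h.
  by rewrite rpredN Crat_rat.
have sp : size p = 3%N by lia.
have pe : p = g by apply/eqP; rewrite -eqp_monic // -dvdp_size_eqp // sp sg.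
have := polyOverP (_ : minCpoly x \is a polyOver Num.int) 1%N.
move=> /(_ hA); rewrite Dp pe coef_map /g !coefE /=.
by rewrite sub0r addr0 rmorphN rpredN.
Qed.

Lemma OK_rep x : inOK x -> exists U W : int, 60%:R * x = U%:~R + W%:~R * s30.
Proof.
case=> [[q1 [q2 ->]] hA].
have /intrP[u hu] := @trace_int q1 q2 hA.
have e2 : ratr (2%:R * q1) = 2%:R * ratr q1 :> algC by rewrite rmorphM /= rmorph_nat.
have e60 : ratr (60%:R * q2) = 60%:R * ratr q2 :> algC by rewrite rmorphM /= rmorph_nat.
have hx' : ratr (2%:R * q1) - (ratr q1 + ratr q2 * s30) \in Aint.
  by rewrite rpredB // hu Aint_int.
have hw : ((ratr q1 + ratr q2 * s30) - (ratr (2%:R * q1) - (ratr q1 + ratr q2 * s30))) * s30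
          = ratr (60%:R * q2).
  rewrite e2 e60; apply/eqP; rewrite -subr_eq0; apply/eqP.
  transitivity (2%:R * ratr q2 * (s30 ^+ 2 - 30%:R)); first by ring.
  by rewrite s30sq subrr mulr0.
have /intrP[w hw'] : (ratr (60%:R * q2) : algC) \in Num.int.
  apply: Cint_rat_Aint; first exact: Crat_rat.
  by rewrite -hw rpredM //; [apply: rpredB | exact: s30_Aint].
exists (30 * u)%R, w.
rewrite rmorphM /= -hu -hw' e2 e60.
rewrite [(30%:~R : algC)]/(_%:~R) /=. ring.
Qed.


Set Implicit Arguments.

Lemma K_uniq_int (U W U' W' : int) : U%:~R + W%:~R * s30 = U'%:~R + W'%:~R * s30 :> algC -> U = U' /\ W = W'.
Proof.
move=> h.
have := @K_uniq0 (U - U')%:~R (W - W')%:~R.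
rewrite !rpred_int => /(_ isT isT) [].
  by rewrite !rmorphB /= mulrBl addrACA h addrACA !subrr addr0.
by move=> /eqP; rewrite intr_eq0 subr_eq0 => /eqP -> /eqP; rewrite intr_eq0 subr_eq0 => /eqP ->.
Qed.

Lemma jW A B : j_weierstrass 0 A 0 B 0 =
  (16%:R * A ^+ 2 - 48%:R * B) ^+ 3 / (16%:R * B ^+ 2 * (A ^+ 2 - 4%:R * B)).
Proof.
rewrite /j_weierstrass; congr (_ / _); ring.
Qed.

Section Ideal.
Variable q : nat.
Hypothesis qP : prime q.
Hypothesis q5 : (5 < q)%N.
Local Notation F := 'F_q.
Variable r : F.
Hypothesis r2 : r ^+ 2 = 30%:R.

Lemma natF_neq0 n : (0 < n)%N -> (n < q)%N -> (n%:R : F) != 0.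
Proof.
move=> h0 hq; rewrite -(dvdn_pcharf (pchar_Fp qP)).
by rewrite gtnNdvd.
Qed.

Definition Rel (x : algC) (t : F) := exists D U W : int,
  [/\ (D%:~R : F) != 0, D%:~R * x = U%:~R + W%:~R * s30 & t * D%:~R = U%:~R + W%:~R * r].

Lemma Rel_fun x t t' : Rel x t -> Rel x t' -> t = t'.
Proof.
move=> [D [U [W [hD e1 e2]]]] [D' [U' [W' [hD' e1' e2']]]].
have : (D' * U)%:~R + (D' * W)%:~R * s30 = (D * U')%:~R + (D * W')%:~R * s30 :> algC.
  have -> : (D' * U)%:~R + (D' * W)%:~R * s30 = D'%:~R * (U%:~R + W%:~R * s30) :> algC by ring.
  have -> : (D * U')%:~R + (D * W')%:~R * s30 = D%:~R * (U'%:~R + W'%:~R * s30) :> algC by ring.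
  by rewrite -e1 -e1'; ring.
move=> /K_uniq_int [h1 h2].
have : t * (D%:~R * D'%:~R) = t' * (D%:~R * D'%:~R).
  have -> : t * (D%:~R * D'%:~R) = D'%:~R * (t * D%:~R) by ring.
  have -> : t' * (D%:~R * D'%:~R) = D%:~R * (t' * D'%:~R) by ring.
  rewrite e2 e2'.
  have -> : (D'%:~R : F) * (U%:~R + W%:~R * r) = (D' * U)%:~R + (D' * W)%:~R * r by ring.
  rewrite h1 h2; ring.
by move/mulIf; apply; rewrite mulf_neq0.
Qed.

Lemma Rel_int z : Rel z%:~R z%:~R.
Proof. by exists 1, z, 0; split; rewrite ?oner_eq0 //; ring. Qed.

Lemma Rel_nat n : Rel n%:R n%:R.
Proof. by exists 1, n%:Z, 0; split; rewrite ?oner_eq0 //; ring. Qed.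

Lemma Rel_0 : Rel 0 0.
Proof. by exists 1, 0, 0; split; rewrite ?oner_eq0 //; ring. Qed.

Lemma Rel_1 : Rel 1 1.
Proof. by exists 1, 1, 0; split; rewrite ?oner_eq0 //; ring. Qed.

Lemma Rel_s : Rel s30 r.
Proof. by exists 1, 0, 1; split; rewrite ?oner_eq0 //; ring. Qed.

Lemma Rel_add x y t u : Rel x t -> Rel y u -> Rel (x + y) (t + u).
Proof.
move=> [D [U [W [hD e1 e2]]]] [D' [U' [W' [hD' e1' e2']]]].
exists (D * D'), (D' * U + D * U'), (D' * W + D * W'); split.
- by rewrite rmorphM mulf_neq0.
- have -> : (D * D')%:~R * (x + y) = D'%:~R * (D%:~R * x) + D%:~R * (D'%:~R * y) :> algC by ring.
  rewrite e1 e1'; ring.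
- have -> : (t + u) * (D * D')%:~R = D'%:~R * (t * D%:~R) + D%:~R * (u * D'%:~R) :> F by ring.
  rewrite e2 e2'; ring.
Qed.

Lemma Rel_mul x y t u : Rel x t -> Rel y u -> Rel (x * y) (t * u).
Proof.
move=> [D [U [W [hD e1 e2]]]] [D' [U' [W' [hD' e1' e2']]]].
exists (D * D'), (U * U' + 30 * W * W'), (U * W' + W * U'); split.
- by rewrite rmorphM mulf_neq0.
- have -> : (D * D')%:~R * (x * y) = (D%:~R * x) * (D'%:~R * y) :> algC by ring.
  rewrite e1 e1'; apply/eqP; rewrite -subr_eq0; apply/eqP.
  transitivity ((W * W')%:~R * (s30 ^+ 2 - 30%:R) : algC); first by ring.
  by rewrite s30sq subrr mulr0.
- have -> : (t * u) * (D * D')%:~R = (t * D%:~R) * (u * D'%:~R) :> F by ring.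
  rewrite e2 e2'; apply/eqP; rewrite -subr_eq0; apply/eqP.
  transitivity ((W * W')%:~R * (r ^+ 2 - 30%:R) : F); first by ring.
  by rewrite r2 subrr mulr0.
Qed.

Lemma Rel_opp x t : Rel x t -> Rel (- x) (- t).
Proof.
move=> [D [U [W [hD e1 e2]]]].
exists D, (- U), (- W); split => //.
- have -> : D%:~R * - x = - (D%:~R * x) :> algC by ring.
  rewrite e1; ring.
- have -> : - t * D%:~R = - (t * D%:~R) :> F by ring.
  rewrite e2; ring.
Qed.

Lemma Rel_sub x y t u : Rel x t -> Rel y u -> Rel (x - y) (t - u).
Proof. by move=> h1 h2; apply: Rel_add h1 (Rel_opp h2). Qed.

Lemma Rel_exp x t n : Rel x t -> Rel (x ^+ n) (t ^+ n).
Proof.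
move=> h; elim: n => [|n IH]; first by rewrite !expr0; exact: Rel_1.
by rewrite !exprS; apply: Rel_mul.
Qed.


Lemma F60 : ((60%:Z)%:~R : F) != 0.
Proof.
have -> : ((60%:Z)%:~R : F) = 2%:R * 2%:R * 3%:R * 5%:R by ring.
by rewrite !mulf_neq0 // natF_neq0 //; apply: leq_trans q5.
Qed.

Definition PP (x : algC) : Prop := inOK x /\ Rel x 0.

Lemma OK_Rel x : inOK x -> exists t, Rel x t.
Proof.
move=> /OK_rep [U [W e]].
exists ((U%:~R + W%:~R * r) / (60%:Z)%:~R), 60, U, W; split.
- exact: F60.
- by rewrite -e.
- by rewrite mulfVK // F60.
Qed.

Lemma ratrD' (a b : rat) : ratr (a + b) = ratr a + ratr b :> algC.
Proof. exact: rmorphD. Qed.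
Lemma ratrM' (a b : rat) : ratr (a * b) = ratr a * ratr b :> algC.
Proof. exact: rmorphM. Qed.
Lemma ratrN' (a : rat) : ratr (- a) = - ratr a :> algC.
Proof. exact: rmorphN. Qed.
Lemma ratrn' (n : nat) : ratr (n%:R) = n%:R :> algC.
Proof. exact: ratr_nat. Qed.

Lemma inK_add x y : inK x -> inK y -> inK (x + y).
Proof.
move=> [q1 [q2 ->]] [p1 [p2 ->]]; exists (q1 + p1), (q2 + p2).
rewrite !ratrD'; ring.
Qed.

Lemma inK_mul x y : inK x -> inK y -> inK (x * y).
Proof.
move=> [q1 [q2 ->]] [p1 [p2 ->]]; exists (q1 * p1 + 30%:R * (q2 * p2)), (q1 * p2 + q2 * p1).
rewrite !ratrD' !ratrM' ratrn'.
apply/eqP; rewrite -subr_eq0; apply/eqP.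
transitivity (ratr q2 * ratr p2 * (s30 ^+ 2 - 30%:R) : algC); first by ring.
by rewrite s30sq subrr mulr0.
Qed.

Lemma inK_int z : inK z%:~R.
Proof. by exists z%:~R, 0; rewrite rmorph0 mul0r addr0 ratr_int. Qed.

Lemma inK_nat n : inK n%:R.
Proof. by exists n%:R, 0; rewrite rmorph0 mul0r addr0 ratr_nat. Qed.

Lemma inK_s : inK s30.
Proof. by exists 0, 1; rewrite rmorph0 rmorph1 add0r mul1r. Qed.

Lemma inK_opp x : inK x -> inK (- x).
Proof. by move=> [q1 [q2 ->]]; exists (- q1), (- q2); rewrite !rmorphN /=; ring. Qed.

Lemma inv_aux (a b m s : algC) : m != 0 -> a + b * s != 0 ->
  (a + b * s) * (a - b * s) = m -> (a + b * s)^-1 = a / m + (- b / m) * s.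
Proof.
move=> m0 x0 h.
apply: (mulfI x0); rewrite mulfV //.
have -> : (a + b * s) * (a / m + - b / m * s) = ((a + b * s) * (a - b * s)) / m by field.
by rewrite h mulfV.
Qed.

Lemma inK_inv x : inK x -> x != 0 -> inK x^-1.
Proof.
move=> [q1 [q2 ->]] xn0.
set n : rat := q1 ^+ 2 - 30%:R * q2 ^+ 2.
have hx : (ratr q1 + ratr q2 * s30) * (ratr q1 - ratr q2 * s30) = ratr n :> algC.
  rewrite /n rmorphB rmorphXn rmorphM /= rmorph_nat rmorphXn.
  apply/eqP; rewrite -subr_eq0; apply/eqP.
  transitivity (- ratr q2 ^+ 2 * (s30 ^+ 2 - 30%:R) : algC); first by ring.
  by rewrite s30sq subrr mulr0.
have nn0 : (ratr n : algC) != 0.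
  apply/negP => /eqP h0.
  have h : ratr q1 + ratr (- q2) * s30 = 0 :> algC.
    move: hx; rewrite h0 => /eqP; rewrite mulf_eq0 (negPf xn0) /= => /eqP h.
    by rewrite rmorphN mulNr.
  have [h1 h2] := @K_uniq0 (ratr q1) (ratr (- q2)) (Crat_rat _) (Crat_rat _) h.
  move: h2; rewrite rmorphN /= => /eqP; rewrite oppr_eq0 => /eqP h2.
  by move: xn0; rewrite h1 h2 mul0r addr0 eqxx.
exists (q1 / n), (- q2 / n).
have -> : ratr (q1 / n) = ratr q1 / ratr n :> algC by exact: fmorph_div.
have -> : ratr (- q2 / n) = - ratr q2 / ratr n :> algC by rewrite fmorph_div rmorphN.
exact: inv_aux.
Qed.

Lemma inOK_add x y : inOK x -> inOK y -> inOK (x + y).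
Proof. by move=> [h1 h2] [h3 h4]; split; [apply: inK_add | apply: rpredD]. Qed.

Lemma inOK_mul x y : inOK x -> inOK y -> inOK (x * y).
Proof. by move=> [h1 h2] [h3 h4]; split; [apply: inK_mul | apply: rpredM]. Qed.

Lemma PP_ideal : prime_ideal_OK PP.
Proof.
split.
- by move=> x [].
- split; [split; [by rewrite -(mulr0n 1); apply: inK_nat | exact: rpred0] | exact: Rel_0].
- move=> x y [h1 h2] [h3 h4]; split; first exact: inOK_add.
  by rewrite -(addr0 0); apply: Rel_add.
- move=> y x hy [hx hx0]; split; first exact: inOK_mul.
  have [t ht] := OK_Rel hy.
  by rewrite -(mulr0 t); apply: Rel_mul.
- move=> [_ h]; have := Rel_fun h Rel_1.
  by move/eqP; rewrite eq_sym oner_eq0.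
- move=> x y hx hy [_ hxy].
  have [t ht] := OK_Rel hx; have [u hu] := OK_Rel hy.
  have := Rel_fun (Rel_mul ht hu) hxy.
  move/eqP; rewrite mulf_eq0 => /orP [/eqP ht0 | /eqP hu0].
    by left; split => //; rewrite -ht0.
  by right; split => //; rewrite -hu0.
- exists q%:R; split.
    split; [split; [exact: inK_nat | exact: rpred_nat] |].
    by rewrite -(pchar_Fp_0 qP); apply: Rel_nat.
  by rewrite pnatr_eq0; case: q qP.
Qed.

Lemma PP_char : residue_char PP q.
Proof.
split => //; split; first by split; [exact: inK_nat | exact: rpred_nat].
by rewrite -(pchar_Fp_0 qP); apply: Rel_nat.
Qed.

Lemma not_integral x N D tN tD : Rel N tN -> Rel D tD -> tN != 0 -> tD = 0 ->
  D != 0 -> x = N / D -> ~ integral_at PP x.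
Proof.
move=> hN hD tN0 tD0 D0 -> [al [be [hal hbe nPbe e]]].
have be0 : be != 0.
  by apply/negP => /eqP be0; apply: nPbe; rewrite be0; exact: (pi_0 PP_ideal).
have e2 : al * D = N * be.
  have -> : al = N / D * be by rewrite e mulfVK.
  by field.
have [ta hta] := OK_Rel hal; have [tb htb] := OK_Rel hbe.
have hNb : Rel (al * D) (tN * tb) by rewrite e2; apply: Rel_mul.
have := Rel_fun (Rel_mul hta hD) hNb.
rewrite tD0 mulr0 => /eqP; rewrite eq_sym mulf_eq0 (negPf tN0) /= => /eqP tb0.
by apply: nPbe; split => //; rewrite -tb0.
Qed.


Lemma key A B tA tB : Rel A tA -> Rel B tB -> B != 0 -> A ^+ 2 - 4%:R * B != 0 ->
  tB * (tA ^+ 2 - 4%:R * tB) = 0 -> 16%:R * tA ^+ 2 - 48%:R * tB != 0 ->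
  ~ integral_at PP (j_weierstrass 0 A 0 B 0).
Proof.
move=> hA hB B0 AB0 t0 tN0.
apply: (@not_integral _ ((16%:R * A ^+ 2 - 48%:R * B) ^+ 3) (16%:R * B ^+ 2 * (A ^+ 2 - 4%:R * B))
   ((16%:R * tA ^+ 2 - 48%:R * tB) ^+ 3) (16%:R * tB ^+ 2 * (tA ^+ 2 - 4%:R * tB))).
- apply: Rel_exp; apply: Rel_sub; apply: Rel_mul; (try apply: Rel_nat) => //; exact: Rel_exp.
- apply: Rel_mul; last by apply: Rel_sub => //; apply: Rel_mul => //; apply: Rel_nat.
  apply: Rel_mul; [exact: Rel_nat | exact: Rel_exp].
- by rewrite expf_neq0.
- have -> : 16%:R * tB ^+ 2 * (tA ^+ 2 - 4%:R * tB) = 16%:R * tB * (tB * (tA ^+ 2 - 4%:R * tB)) by ring.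
  by rewrite t0 mulr0.
- by rewrite !mulf_neq0 ?expf_neq0 // pnatr_eq0.
- by rewrite jW.
Qed.

Lemma key_notAint x : inK x -> ~ integral_at PP x -> x \notin Aint.
Proof.
move=> hK hI; apply/negP => hA; apply: hI.
exists x, 1; split => //.
- split; last exact: rpred1.
  by exists 1, 0; rewrite rmorph1 rmorph0 mul0r addr0.
- exact: (pi_proper PP_ideal).
- by rewrite divr1.
Qed.

End Ideal.

Unset Strict Implicit.

Set Implicit Arguments. Unset Strict Implicit.

Lemma Fp_int0 p z : prime p -> ((z%:~R : 'F_p) = 0) <-> (p %| `|z|)%N.
Proof.
move=> pP; rewrite (dvdn_pcharf (pchar_Fp pP)).
case: z => n.
  have -> : ((Posz n)%:~R : 'F_p) = n%:R by ring.
  by split => /eqP.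
have -> : ((Negz n)%:~R : 'F_p) = - (n.+1)%:R by rewrite NegzE; ring.
by rewrite /=; split; [move/eqP; rewrite oppr_eq0 | move/eqP ->; rewrite oppr0].
Qed.

Lemma gcd_contra p a b : prime p -> gcdz a b = 1 -> (p %| `|a|)%N -> (p %| `|b|)%N -> False.
Proof.
move=> pP hg ha hb.
have : (p%:Z %| gcdz a b)%Z by rewrite dvdz_gcd !dvdzE /= ha hb.
rewrite hg dvdzE /= dvdn1 => /eqP p1.
by move: pP; rewrite p1.
Qed.

Lemma natFp_neq0 p n : prime p -> (0 < n)%N -> (n < p)%N -> (n%:R : 'F_p) != 0.
Proof.
move=> pP h0 hq; rewrite -(dvdn_pcharf (pchar_Fp pP)).
by rewrite gtnNdvd.
Qed.

Lemma Fp_pow4_0 p (x : 'F_p) : x ^+ 4 = 0 -> x = 0.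
Proof. by move/eqP; rewrite expf_eq0 /= => /eqP. Qed.

Definition Vab (a b : int) : int := 3 * a ^+ 4 + 12 * a ^+ 2 * b ^+ 2 + 2 * b ^+ 4.

Lemma dvd_mulp (p : nat) (w : int) : (p %| `|(p%:Z * w)%R|)%N.
Proof. by rewrite abszM dvdn_mulr. Qed.

Lemma Euclid4 p z : prime p -> (p %| `|z ^+ 4|)%N -> (p %| `|z|)%N.
Proof. by move=> pP; rewrite abszX Euclid_dvdX // => /andP[]. Qed.

Lemma dvd_ex p z : (p %| `|z|)%N -> exists w, z = p%:Z * w.
Proof.
move=> h; have : (p%:Z %| z)%Z by rewrite dvdzE.
by case/dvdzP => w ->; exists w; rewrite mulrC.
Qed.

Lemma cancel_int (k : int) x y : k != 0 -> k * x = k * y -> x = y.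
Proof. by move=> k0 /(mulfI k0). Qed.

Lemma Vab_F p a b : ((Vab a b)%:~R : 'F_p) =
  3%:R * a%:~R ^+ 4 + 12%:R * a%:~R ^+ 2 * b%:~R ^+ 2 + 2%:R * b%:~R ^+ 4.
Proof. rewrite /Vab; ring. Qed.

Lemma V_F p a b c l : prime p -> (p %| `|c|)%N -> (0 < l)%N -> Vab a b = c ^+ l ->
  3%:R * a%:~R ^+ 4 + 12%:R * a%:~R ^+ 2 * b%:~R ^+ 2 + 2%:R * b%:~R ^+ 4 = 0 :> 'F_p.
Proof.
move=> pP pc l0 hV; rewrite -Vab_F hV rmorphXn /=.
by have /(@Fp_int0 p c pP) -> := pc; rewrite expr0n; case: l l0 hV.
Qed.

Lemma no2 a b c l : prime l -> gcdz a b = 1 -> Vab a b = c ^+ l -> (2 %| `|c|)%N -> False.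
Proof.
move=> lP hg hV h2.
have l2 : (2 <= l)%N by apply: prime_gt1.
have [k hk] := dvd_ex h2.
have hM : Vab a b = 4 * (k ^+ l * 2 ^+ (l - 2)).
  rewrite hV hk exprMn -{1}(subnKC l2) exprD; ring.
set M := (k ^+ l * 2 ^+ (l - 2)) in hM.
have ha : (2 %| `|a|)%N.
  apply: (Euclid4 _ (z := a)) => //.
  have -> : a ^+ 4 = 2%:Z * (2 * M - a ^+ 4 - 6 * a ^+ 2 * b ^+ 2 - b ^+ 4).
    by move: hM; rewrite /Vab; lia.
  exact: dvd_mulp.
have [a' ha'] := dvd_ex ha.
have hb : (2 %| `|b|)%N.
  apply: (Euclid4 _ (z := b)) => //.
  have -> : b ^+ 4 = 2%:Z * (M - 12 * a' ^+ 4 - 12 * a' ^+ 2 * b ^+ 2).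
    apply: (@cancel_int 2) => //.
    apply/eqP; rewrite -subr_eq0; apply/eqP.
    transitivity (Vab a b - 4 * M); last by rewrite hM subrr.
    rewrite /Vab ha'; ring.
  exact: dvd_mulp.
exact: (gcd_contra (p := 2)) hg ha hb.
Qed.

Lemma no3 a b c l : prime l -> gcdz a b = 1 -> Vab a b = c ^+ l -> (3 %| `|c|)%N -> False.
Proof.
move=> lP hg hV h3.
have l2 : (2 <= l)%N by apply: prime_gt1.
have [k hk] := dvd_ex h3.
have hM : Vab a b = 9 * (k ^+ l * 3 ^+ (l - 2)).
  rewrite hV hk exprMn -{1}(subnKC l2) exprD; ring.
set M := (k ^+ l * 3 ^+ (l - 2)) in hM.
have hb : (3 %| `|b|)%N.
  apply: (Euclid4 _ (z := b)) => //.
  have -> : b ^+ 4 = 3%:Z * (6 * M - 2 * a ^+ 4 - 8 * a ^+ 2 * b ^+ 2 - b ^+ 4).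
    by move: hM; rewrite /Vab; lia.
  exact: dvd_mulp.
have [b' hb'] := dvd_ex hb.
have ha : (3 %| `|a|)%N.
  apply: (Euclid4 _ (z := a)) => //.
  have -> : a ^+ 4 = 3%:Z * (M - 12 * a ^+ 2 * b' ^+ 2 - 18 * b' ^+ 4).
    apply: (@cancel_int 3) => //.
    apply/eqP; rewrite -subr_eq0; apply/eqP.
    transitivity (Vab a b - 9 * M); last by rewrite hM subrr.
    rewrite /Vab hb'; ring.
  exact: dvd_mulp.
exact: (gcd_contra (p := 3)) hg ha hb.
Qed.

Lemma no5 a b c l : prime l -> gcdz a b = 1 -> Vab a b = c ^+ l -> (5 %| `|c|)%N -> False.
Proof.
move=> lP hg hV h5.
have p5 : prime 5 by [].
have E := V_F p5 h5 (prime_gt0 lP) hV.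
have fer (z : 'F_5) : z != 0 -> z ^+ 4 = 1.
  move=> z0; have := expf_card z; rewrite card_Fp // => h.
  by apply: (mulfI z0); rewrite -exprS h mulr1.
have n2 : (2%:R : 'F_5) != 0 by apply: natFp_neq0.
have n3 : (3%:R : 'F_5) != 0 by apply: natFp_neq0.
have [x0|x0] := eqVneq (a%:~R : 'F_5) 0.
  have y0 : (b%:~R : 'F_5) = 0.
    apply: Fp_pow4_0; apply/eqP; rewrite -(mulrI_eq0 _ (lregP n2)).
    by rewrite -E x0; apply/eqP; ring.
  exact: (gcd_contra p5 hg (proj1 (Fp_int0 a p5) x0) (proj1 (Fp_int0 b p5) y0)).
have [y0|y0] := eqVneq (b%:~R : 'F_5) 0.
  have : (a%:~R : 'F_5) = 0.
    apply: Fp_pow4_0; apply/eqP; rewrite -(mulrI_eq0 _ (lregP n3)).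
    by rewrite -E y0; apply/eqP; ring.
  by move/eqP; rewrite (negPf x0).
have : (2%:R * 2%:R * 3%:R : 'F_5) * (a%:~R * b%:~R) ^+ 2 = 0.
  have -> : (2%:R * 2%:R * 3%:R : 'F_5) * (a%:~R * b%:~R) ^+ 2 =
    (3%:R * a%:~R ^+ 4 + 12%:R * a%:~R ^+ 2 * b%:~R ^+ 2 + 2%:R * b%:~R ^+ 4) - 5%:R * 1.
    by rewrite (fer _ x0) (fer _ y0); ring.
  by rewrite E (pchar_Fp_0 p5) mul0r subr0.
by move/eqP; rewrite !mulf_eq0 (negPf n2) (negPf n3) /= (negPf x0) (negPf y0).
Qed.

Lemma Vab_ge2 a b : gcdz a b = 1 -> 2 <= Vab a b.
Proof.
move=> hg.
have ab : (a != 0) || (b != 0).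
  case: eqP => [a0|//]; case: eqP => [b0|//].
  by move: hg; rewrite a0 b0.
rewrite /Vab !exprS !expr0 !mulr1.
case/orP: ab => h; nia.
Qed.

Lemma exists_q l a b c : prime l -> gcdz a b = 1 -> Vab a b = c ^+ l ->
  exists q, [/\ prime q, (5 < q)%N & (q %| `|c|)%N].
Proof.
move=> lP hg hV.
have V2 := Vab_ge2 hg.
have c1 : (1 < `|c|)%N.
  rewrite ltnNge; apply/negP => hc.
  have : (`|Vab a b| <= 1)%N.
    rewrite hV abszX.
    move: hc; case: (`|c|%N) => [|[|k]] // _.
      by rewrite exp0n ?prime_gt0.
    by rewrite exp1n.
  lia.
exists (pdiv `|c|); split; [exact: pdiv_prime | | exact: pdiv_dvd].
have qP := pdiv_prime c1.
have q2 := prime_gt1 qP.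
have n2 : pdiv `|c| != 2%N by apply/eqP => e; apply: (no2 lP hg hV); rewrite -e pdiv_dvd.
have n3 : pdiv `|c| != 3%N by apply/eqP => e; apply: (no3 lP hg hV); rewrite -e pdiv_dvd.
have n5 : pdiv `|c| != 5%N by apply/eqP => e; apply: (no5 lP hg hV); rewrite -e pdiv_dvd.
have n4 : pdiv `|c| != 4%N by apply/eqP => e; move: qP; rewrite e.
lia.
Qed.


Set Implicit Arguments. Unset Strict Implicit.

Lemma Fq_facts q a b c l : prime q -> (5 < q)%N -> (q %| `|c|)%N -> prime l ->
  gcdz a b = 1 -> Vab a b = c ^+ l ->
  [/\ (a%:~R : 'F_q) != 0, (b%:~R : 'F_q) != 0,
      3%:R * (a%:~R : 'F_q) ^+ 2 + b%:~R ^+ 2 != 0 &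
      3%:R * (a%:~R : 'F_q) ^+ 4 + 12%:R * a%:~R ^+ 2 * b%:~R ^+ 2 + 2%:R * b%:~R ^+ 4 = 0].
Proof.
move=> qP q5 qc lP hg hV.
have E := V_F qP qc (prime_gt0 lP) hV.
have n2 : (2%:R : 'F_q) != 0 by apply: natFp_neq0 => //; apply: leq_trans q5.
have n3 : (3%:R : 'F_q) != 0 by apply: natFp_neq0 => //; apply: leq_trans q5.
have n5 : (5%:R : 'F_q) != 0 by apply: natFp_neq0.
have a0 : (a%:~R : 'F_q) != 0.
  apply/eqP => x0.
  have y0 : (b%:~R : 'F_q) = 0.
    apply: Fp_pow4_0; apply/eqP; rewrite -(mulrI_eq0 _ (lregP n2)).
    by rewrite -E x0; apply/eqP; ring.
  exact: (gcd_contra qP hg (proj1 (Fp_int0 a qP) x0) (proj1 (Fp_int0 b qP) y0)).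
have b0 : (b%:~R : 'F_q) != 0.
  apply/eqP => y0; move/eqP: a0; apply.
  apply: Fp_pow4_0; apply/eqP; rewrite -(mulrI_eq0 _ (lregP n3)).
  by rewrite -E y0; apply/eqP; ring.
split => //.
apply/eqP => d0; move/eqP: a0; apply.
apply: Fp_pow4_0; apply/eqP; rewrite -(mulrI_eq0 _ (lregP (mulf_neq0 n3 n5))).
apply/eqP.
transitivity ((2%:R * b%:~R ^+ 2 + 6%:R * a%:~R ^+ 2) * (3%:R * a%:~R ^+ 2 + b%:~R ^+ 2)
   - (3%:R * (a%:~R : 'F_q) ^+ 4 + 12%:R * a%:~R ^+ 2 * b%:~R ^+ 2 + 2%:R * b%:~R ^+ 4)); first by ring.
by rewrite d0 E mulr0 subrr.
Qed.

Lemma nz_form (U W : int) : W != 0 -> U%:~R + W%:~R * s30 != 0 :> algC.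
Proof.
move=> W0; apply/eqP => h.
have e0 : U%:~R + W%:~R * s30 = (0 : int)%:~R + (0 : int)%:~R * s30 :> algC.
  by rewrite h; ring.
have [_ /eqP] := K_uniq_int _ _ _ _ e0.
by rewrite (negPf W0).
Qed.

Lemma ab_pos a b : gcdz a b = 1 -> 0 < 3 * a ^+ 2 + b ^+ 2 /\ 0 < a ^+ 2 + 2 * b ^+ 2.
Proof.
move=> hg.
have ab : (a != 0) || (b != 0).
  case: eqP => [a0|//]; case: eqP => [b0|//].
  by move: hg; rewrite a0 b0.
rewrite !exprS !expr0 !mulr1.
case/orP: ab => h; split; nia.
Qed.

Lemma inK_exp x n : inK x -> inK (x ^+ n).
Proof.
move=> h; elim: n => [|n IH]; first by rewrite expr0 -[1]/(1%:R); apply: inK_nat.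
by rewrite exprS; apply: inK_mul.
Qed.

Ltac solveK := repeat first [apply: inK_nat | apply: inK_int | apply: inK_s | apply: inK_exp
  | apply: inK_mul | apply: inK_add | apply: inK_opp].

Lemma jK A B : inK A -> inK B -> B != 0 -> A ^+ 2 - 4%:R * B != 0 -> inK (j_weierstrass 0 A 0 B 0).
Proof.
move=> hA hB B0 AB0; rewrite jW; apply: inK_mul; first by solveK.
apply: inK_inv; first by solveK.
by rewrite !mulf_neq0 ?expf_neq0 // pnatr_eq0.
Qed.

Ltac solveR r2 := repeat first [apply: Rel_nat | apply: Rel_int | apply: Rel_s | apply: (Rel_exp r2)
  | apply: Rel_add | apply: Rel_sub | apply: (Rel_mul r2)].

Unset Implicit Arguments.

Theorem lemma4p1 (l : nat) (a b c : int) :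
  prime l ->
  gcdz a b = 1 ->
  (a - b) ^+ 4 + a ^+ 4 + (a + b) ^+ 4 = c ^+ l ->
  [/\ j1 a b \notin Aint, j2 a b \notin Aint &
      exists (P : algC -> Prop) (p : nat),
        [/\ prime_ideal_OK P, residue_char P p, (5 < p)%N,
            ~ integral_at P (j1 a b) & ~ integral_at P (j2 a b)]].
Proof.
move=> lP hg hV'.
have hV : Vab a b = c ^+ l by rewrite -hV' /Vab; ring.
have [q [qP q5 qc]] := exists_q lP hg hV.
have [a0 b0 d0 E] := Fq_facts qP q5 qc lP hg hV.
have [p1 p2] := ab_pos hg.
set al : 'F_q := a%:~R in a0 d0 E.
set be : 'F_q := b%:~R in b0 d0 E.
set d : 'F_q := 3%:R * al ^+ 2 + be ^+ 2 in d0.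
pose r : 'F_q := - (15%:R * al ^+ 2) / d.
have rd : r * d = - (15%:R * al ^+ 2) by rewrite /r mulfVK.
have r2 : r ^+ 2 = 30%:R.
  apply: (mulIf (expf_neq0 2 d0)); rewrite -exprMn rd.
  transitivity (30%:R * d ^+ 2 - 15%:R * (3%:R * al ^+ 4 + 12%:R * al ^+ 2 * be ^+ 2 + 2%:R * be ^+ 4)).
    by rewrite /d; ring.
  by rewrite E mulr0 subr0.
have n2 : (2%:R : 'F_q) != 0 by apply: natFp_neq0 => //; apply: leq_trans q5.
have n3 : (3%:R : 'F_q) != 0 by apply: natFp_neq0 => //; apply: leq_trans q5.
have n5 : (5%:R : 'F_q) != 0 by apply: natFp_neq0.
have I1 : ~ integral_at (PP q r) (j1 a b).
  apply: (key qP q5 r2 (tA := 60%:R * al) (tB := 30%:R * ((15%:R + 3%:R * r) * al ^+ 2 + r * be ^+ 2))).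
  - by solveR r2.
  - by solveR r2.
  - have -> : 30%:R * ((15%:R + 3%:R * s30) * a%:~R ^+ 2 + s30 * b%:~R ^+ 2) =
      (450 * a ^+ 2)%:~R + (30 * (3 * a ^+ 2 + b ^+ 2))%:~R * s30 :> algC by ring.
    by apply: nz_form; lia.
  - have -> : (60%:R * a%:~R) ^+ 2 - 4%:R * (30%:R * ((15%:R + 3%:R * s30) * a%:~R ^+ 2 + s30 * b%:~R ^+ 2)) =
      (1800 * a ^+ 2)%:~R + (- 120 * (3 * a ^+ 2 + b ^+ 2))%:~R * s30 :> algC by ring.
    by apply: nz_form; lia.
  - have -> : 30%:R * ((15%:R + 3%:R * r) * al ^+ 2 + r * be ^+ 2) = 30%:R * (15%:R * al ^+ 2 + r * d).
      by rewrite /d; ring.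
    by rewrite rd subrr mulr0 mul0r.
  - have -> : 30%:R * ((15%:R + 3%:R * r) * al ^+ 2 + r * be ^+ 2) = 30%:R * (15%:R * al ^+ 2 + r * d).
      by rewrite /d; ring.
    rewrite rd subrr mulr0 mulr0 subr0.
    have -> : 16%:R * (60%:R * al) ^+ 2 = (2%:R ^+ 8 * 3%:R ^+ 2 * 5%:R ^+ 2) * al ^+ 2 :> 'F_q by ring.
    by rewrite !mulf_neq0 ?expf_neq0.
have I2 : ~ integral_at (PP q r) (j2 a b).
  have hAB : (40%:R * be) ^+ 2 - 4%:R * (20%:R * (r * al ^+ 2 + (10%:R + 2%:R * r) * be ^+ 2)) = 0.
    apply: (mulIf d0); rewrite mul0r.
    transitivity (800%:R * be ^+ 2 * d - 80%:R * (r * d) * (al ^+ 2 + 2%:R * be ^+ 2)).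
      by rewrite /d; ring.
    rewrite rd.
    transitivity (400%:R * (3%:R * al ^+ 4 + 12%:R * al ^+ 2 * be ^+ 2 + 2%:R * be ^+ 4)).
      by rewrite /d; ring.
    by rewrite E mulr0.
  apply: (key qP q5 r2 (tA := 40%:R * be) (tB := 20%:R * (r * al ^+ 2 + (10%:R + 2%:R * r) * be ^+ 2))).
  - by solveR r2.
  - by solveR r2.
  - have -> : 20%:R * (s30 * a%:~R ^+ 2 + (10%:R + 2%:R * s30) * b%:~R ^+ 2) =
      (200 * b ^+ 2)%:~R + (20 * (a ^+ 2 + 2 * b ^+ 2))%:~R * s30 :> algC by ring.
    by apply: nz_form; lia.
  - have -> : (40%:R * b%:~R) ^+ 2 - 4%:R * (20%:R * (s30 * a%:~R ^+ 2 + (10%:R + 2%:R * s30) * b%:~R ^+ 2)) =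
      (800 * b ^+ 2)%:~R + (- 80 * (a ^+ 2 + 2 * b ^+ 2))%:~R * s30 :> algC by ring.
    by apply: nz_form; lia.
  - by rewrite hAB mulr0.
  - have -> : 16%:R * (40%:R * be) ^+ 2 - 48%:R * (20%:R * (r * al ^+ 2 + (10%:R + 2%:R * r) * be ^+ 2)) =
      4%:R * (40%:R * be) ^+ 2 + 12%:R * ((40%:R * be) ^+ 2 - 4%:R * (20%:R * (r * al ^+ 2 + (10%:R + 2%:R * r) * be ^+ 2)))
      by ring.
    rewrite hAB mulr0 addr0.
    have -> : 4%:R * (40%:R * be) ^+ 2 = (2%:R ^+ 8 * 5%:R ^+ 2) * be ^+ 2 :> 'F_q by ring.
    by rewrite !mulf_neq0 ?expf_neq0.
have K1 : inK (j1 a b).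
  apply: jK; try by solveK.
  - have -> : 30%:R * ((15%:R + 3%:R * s30) * a%:~R ^+ 2 + s30 * b%:~R ^+ 2) =
      (450 * a ^+ 2)%:~R + (30 * (3 * a ^+ 2 + b ^+ 2))%:~R * s30 :> algC by ring.
    by apply: nz_form; lia.
  - have -> : (60%:R * a%:~R) ^+ 2 - 4%:R * (30%:R * ((15%:R + 3%:R * s30) * a%:~R ^+ 2 + s30 * b%:~R ^+ 2)) =
      (1800 * a ^+ 2)%:~R + (- 120 * (3 * a ^+ 2 + b ^+ 2))%:~R * s30 :> algC by ring.
    by apply: nz_form; lia.
have K2 : inK (j2 a b).
  apply: jK; try by solveK.
  - have -> : 20%:R * (s30 * a%:~R ^+ 2 + (10%:R + 2%:R * s30) * b%:~R ^+ 2) =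
      (200 * b ^+ 2)%:~R + (20 * (a ^+ 2 + 2 * b ^+ 2))%:~R * s30 :> algC by ring.
    by apply: nz_form; lia.
  - have -> : (40%:R * b%:~R) ^+ 2 - 4%:R * (20%:R * (s30 * a%:~R ^+ 2 + (10%:R + 2%:R * s30) * b%:~R ^+ 2)) =
      (800 * b ^+ 2)%:~R + (- 80 * (a ^+ 2 + 2 * b ^+ 2))%:~R * s30 :> algC by ring.
    by apply: nz_form; lia.
split.
- exact: (key_notAint qP q5 r2 K1 I1).
- exact: (key_notAint qP q5 r2 K2 I2).
- exists (PP q r), q; split => //.
  + exact: (@PP_ideal q qP q5 r r2).
  + exact: PP_char.
Qed.
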